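(* Let $n>2k$, $k\ge t+3$, and let $\mathcal F\subseteq\binom{[n]}{k}$ be a maximal $t$-intersecting family with $\tau_t(\mathcal F)=t+2$ and $\tau_t(\mathcal T_t(\mathcal F))=t+1$. Suppose $\mathcal T_t(\mathcal F)=\left\{T\in\binom{M}{t+2}: |T\cap W|\ge t+1\right\}$ for some $M\in\binom{[n]}{k+2}$ and $W\in\binom{M}{t+2}$. Then: (i) $\mathcal F=\{F\in\binom{[n]}{k}: W\subseteq F\}\cup\{F\in\binom{[n]}{k}: |F\cap W|=t+1,\ F\cap(M\setminus W)\neq\emptyset\}\cup\{F\in\binom{M}{k}: |F\cap W|=t\}$ (i.e. $\mathcal F$ is the Type II family determined by some $M\in\binom{[n]}{k+2}$, $W\in\binom{M}{t+2}$); (ii) $|\mathcal F|>((t+2)(k-t)+1)\binom{n-t-2}{k-t-2}-(t+2)(k-t)^2\binom{n-t-3}{k-t-3}$.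
   Context: A family is $t$-intersecting if any two members meet in at least $t$ elements. A $t$-cover of a family $\mathcal G$ of subsets of $[n]$ is a set $S\subseteq[n]$ with $|S\cap G|\ge t$ for all $G\in\mathcal G$; $\tau_t(\mathcal G)$ is the minimum size of a $t$-cover, and $\mathcal T_t(\mathcal G)$ is the set of all $t$-covers of $\mathcal G$ of size $\tau_t(\mathcal G)$. A $t$-intersecting $\mathcal F\subseteq\binom{[n]}{k}$ is maximal if no $t$-intersecting subfamily of $\binom{[n]}{k}$ properly contains it. *)

(* Defs.v *)
From mathcomp Require Import all_boot all_order all_algebra.
Set Implicit Arguments. Unset Strict Implicit. Unset Printing Implicit Defensive.

Section Defs.
Variable n : nat.
Local Notation sT := {set 'I_n}.

Definition ksubsets (X : sT) (k : nat) : {set sT} :=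
  [set A : sT | (A \subset X) && (#|A| == k)].

Definition t_intersecting (t : nat) (G : {set sT}) : Prop :=
  forall A B, A \in G -> B \in G -> t <= #|A :&: B|.

Definition maximal_t_intersecting (k t : nat) (F : {set sT}) : Prop :=
  [/\ F \subset ksubsets setT k, t_intersecting t F &
      forall G : {set sT}, G \subset ksubsets setT k -> t_intersecting t G ->
        F \subset G -> G = F].

Definition tcover (t : nat) (G : {set sT}) (S : sT) : bool :=
  [forall A in G, t <= #|S :&: A|].

(* tau_t(G): minimum size of a t-cover (n.+1 by convention if none exists) *)
Definition tau (t : nat) (G : {set sT}) : nat :=
  \big[minn/n.+1]_(S : sT | tcover t G S) #|S|.

Definition Tcov (t : nat) (G : {set sT}) : {set sT} :=
  [set S : sT | tcover t G S && (#|S| == tau t G)].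

Definition typeII (k t : nat) (M W : sT) : {set sT} :=
  [set F in ksubsets setT k | W \subset F]
  :|: [set F in ksubsets setT k | (#|F :&: W| == t.+1) && (F :&: (M :\: W) != set0)]
  :|: [set F in ksubsets M k | #|F :&: W| == t].

End Defs.

(* Main.v *)
Require Import Defs.
From mathcomp Require Import all_boot all_order all_algebra.
From mathcomp Require Import zify.
Import GRing.Theory Num.Theory.

Lemma card_U1I (T : finType) (A G : {set T}) m : m \notin A ->
  #|(m |: A) :&: G| = (m \in G) + #|A :&: G|.
Proof.
move=> mA; rewrite setIUl cardsU.
have -> : [set m] :&: G :&: (A :&: G) = set0.
  apply/setP=> x; rewrite !inE; case: eqP => [->|]; by rewrite ?(negbTE mA) ?andbF.
rewrite cards0 subn0; congr (_ + _).
case: (boolP (m \in G)) => mG.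
  by rewrite (setIidPl _) ?cards1 // sub1set.
rewrite (_ : _ :&: _ = set0) ?cards0 //.
by apply/setP=> x; rewrite !inE; case: eqP => // ->; rewrite (negbTE mG).
Qed.

Lemma inter_lb (T : finType) (X Y W : {set T}) :
  #|X :&: W| + #|Y :&: W| <= #|X :&: Y :&: W| + #|W|.
Proof.
have := cardsUI (X :&: W) (Y :&: W).
have -> : X :&: W :&: (Y :&: W) = X :&: Y :&: W.
  by apply/setP=> x; rewrite !inE; case: (x \in X); case: (x \in Y); case: (x \in W).
have : #|X :&: W :|: Y :&: W| <= #|W|.
  by apply: subset_leq_card; apply/subsetP=> x; rewrite !inE => /orP[]/andP[].
lia.
Qed.

Lemma bigmin_leq (I : finType) (P : pred I) (f : I -> nat) x j :
  P j -> \big[minn/x]_(i | P i) f i <= f j.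
Proof.
move=> Pj.
elim: (index_enum I) (mem_index_enum j) => // i r IH.
rewrite inE big_cons => /predU1P[<-|/IH h]; first by rewrite Pj geq_minl.
case: (P i) => //; exact: leq_trans (geq_minr _ _) h.
Qed.

Ltac keepH T := match T with
  | @eq ?A _ _ => unify A nat
  | is_true (leq _ _) => idtac
  end.
Ltac prune := repeat match goal with
  | H : ?T |- _ => tryif keepH T then fail else clear H
  end.
Ltac nlia := prune; lia.

Lemma part_i (n k t : nat) (F : {set {set 'I_n}}) (M W : {set 'I_n}) :
  2 * k < n -> t + 3 <= k ->
  maximal_t_intersecting k t F ->
  tau t F = t + 2 ->
  M \in ksubsets setT (k + 2) -> W \in ksubsets M (t + 2) ->
  Tcov t F = [set T in ksubsets M (t + 2) | t + 1 <= #|T :&: W|] ->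
  F = typeII k t M W.
Proof.
move=> hn hk [Fk Fint Fmax] htau hM hW hT.
move: hM; rewrite /ksubsets inE => /andP[_ /eqP cM].
move: hW; rewrite /ksubsets inE => /andP[WM /eqP cW].
have WMx := subsetP WM.
have cD : #|M :\: W| = k - t by rewrite cardsDS // cM cW; nlia.
have FK : forall G, G \in F -> #|G| = k.
  by move=> G GF; move/subsetP: Fk => /(_ G GF); rewrite inE => /andP[_ /eqP].
have cov : forall G (T : {set 'I_n}), G \in F -> T \subset M -> #|T| = t + 2 ->
    t + 1 <= #|T :&: W| -> t <= #|T :&: G|.
  move=> G T GF TM cT cTW.
  have : T \in Tcov t F by rewrite hT !inE TM cT eqxx.
  by rewrite inE => /andP[/forall_inP H _]; apply: H.
have t1 : 0 < t.
  rewrite lt0n; apply/negP => /eqP t0.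
  move: htau; rewrite t0 => htau.
  have h : tcover 0 F set0 by apply/forall_inP.
  have := @bigmin_leq _ (tcover 0 F) (fun S => #|S|) n.+1 set0 h.
  by rewrite -/(tau 0 F) htau cards0.
have covW : forall G, G \in F -> t <= #|G :&: W|.
  move=> G GF; rewrite setIC; apply: cov => //; rewrite ?setIid cW //; nlia.
have L3 : forall H w, H \in F -> w \in H -> w \in W -> #|H :&: W| = t ->
    (M :\: W \subset H) /\ H \subset M.
  move=> H w HF wH wW cHW.
  have sub : M :\: W \subset H.
    apply/subsetP=> m; rewrite inE => /andP[mW mM].
    have mA : m \notin W :\ w by rewrite !inE (negbTE mW) andbF.
    have cWw : #|W| = #|W :\ w|.+1 by rewrite (cardsD1 w W) wW.
    have := cov H (m |: W :\ w) HF.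
    rewrite cardsU1 mA card_U1I // card_U1I // (negbTE mW) add0n.
    have -> : (W :\ w) :&: W = W :\ w.
      by apply/setP=> x; rewrite !inE; case: (x \in W); rewrite ?andbF ?andbT.
    have -> : (W :\ w) :&: H = (H :&: W) :\ w.
      by apply/setP=> x; rewrite !inE; case: (x \in H); case: (x \in W); case: (x == w).
    have := cardsD1 w (H :&: W); rewrite !inE wH wW /= cHW.
    have sT : m |: W :\ w \subset M.
      apply/subsetP=> x; rewrite !inE => /orP[/eqP->//|/andP[_ xW]]; exact: WMx.
    move=> e /(_ sT); case: (m \in H) => //= h; exfalso.
    suff : t <= #|H :&: W :\ w| by rewrite {1}e add1n ltnn.
    rewrite -(add0n #|_|); apply: h; set a := #|W :\ w| in cWw *; nlia.
  split=> //.
  have : #|H| <= #|H :&: M|.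
    rewrite (FK H HF) -(cardsID W (H :&: M)).
    have -> : H :&: M :&: W = H :&: W.
      by apply/setP=> x; rewrite !inE; case xW: (x \in W); rewrite ?andbF ?andbT // (WMx _ xW) andbT.
    have : #|M :\: W| <= #|H :&: M :\: W|.
      apply: subset_leq_card; apply/subsetP=> x xD; have := xD.
      by rewrite !inE (subsetP sub _ xD) => /andP[-> ->].
    nlia.
  move=> le; have /eqP e : H :&: M == H by rewrite eqEcard subsetIl le.
  by rewrite -e subsetIr.
have X : forall G, G \in F -> #|G :&: W| = t + 1 -> G :&: (M :\: W) = set0 -> False.
  move=> G GF cGW GD.
  have : ~~ (W \subset G).
    apply/negP => /setIidPr e; move: cGW; rewrite e; nlia.
  case/subsetPn => w0 w0W w0G.
  have : 0 < #|~: M| by have := cardsC M; rewrite card_ord cM; nlia.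
  case/card_gt0P => y; rewrite inE => yM.
  have yA : y \notin W :\ w0 by rewrite !inE; apply/negP=> /andP[_ /WMx]; rewrite (negbTE yM).
  have cWw : #|W| = #|W :\ w0|.+1 by rewrite (cardsD1 w0 W) w0W.
  have cT : #|y |: W :\ w0| = t + 2 by rewrite cardsU1 yA; nlia.
  have nT : ~~ tcover t F (y |: W :\ w0).
    apply/negP => cvT.
    have : y |: W :\ w0 \in Tcov t F by rewrite inE cvT htau cT eqxx.
    rewrite hT !inE => /andP[/andP[TM _] _].
    by move: yM; rewrite (subsetP TM y (setU11 _ _)).
  move: nT; rewrite /tcover negb_forall_in => /exists_inP [H HF].
  rewrite -ltnNge card_U1I // => lt.
  have w0A : w0 \notin W :\ w0 by rewrite !inE eqxx.
  have := @card_U1I _ _ H _ w0A; rewrite setD1K // => eWH.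
  have := covW H HF; rewrite setIC eWH.
  set a := #|(W :\ w0) :&: H| in lt *.
  case w0H: (w0 \in H) => /= le; last by move: lt; case: (y \in H) => /=; nlia.
  have cHW : #|H :&: W| = t.
    rewrite setIC eWH w0H -/a; move: lt; case: (y \in H) => /=; nlia.
  have [_ HM] := L3 H w0 HF w0H w0W cHW.
  have sub : G :&: H \subset (H :&: W) :\ w0.
    apply/subsetP=> x /setIP [xG xH].
    have xM := subsetP HM x xH.
    have xW : x \in W.
      apply/negPn/negP => xW.
      have : x \in G :&: (M :\: W) by rewrite !inE xG xM xW.
      by rewrite GD inE.
    rewrite !inE xH xW !andbT; apply/eqP=> xw; by move: w0G; rewrite -xw xG.
  have := subset_leq_card sub.
  have := cardsD1 w0 (H :&: W); rewrite !inE w0H w0W /=.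
  have := Fint G H GF HF.
  set b := #|G :&: H|; set c := #|(H :&: W) :\ w0|; set d := #|H :&: W| in cHW *.
  nlia.
have FII : F \subset typeII k t M W.
  apply/subsetP=> G GF.
  have cG := FK G GF.
  have lo := covW G GF.
  have hi : #|G :&: W| <= t + 2 by rewrite -cW; apply: subset_leq_card; apply: subsetIr.
  rewrite /typeII /ksubsets !inE subsetT cG eqxx /=.
  have : #|G :&: W| = t + 2 \/ #|G :&: W| = t + 1 \/ #|G :&: W| = t by nlia.
  case=> [e|[e|e]].
  - have /eqP eW : G :&: W == W by rewrite eqEcard subsetIr cW e leqnn.
    by rewrite -eW subsetIl.
  - case: (boolP (G :&: (M :\: W) == set0)) => [/eqP GD|GD].
      by case: (X G GF e GD).
    by rewrite e addn1 eqxx /= orbT.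
  - have : 0 < #|G :&: W| by rewrite e.
    case/card_gt0P => w /setIP [wG wW].
    have [_ GM] := L3 G w GF wG wW e.
    by rewrite GM e eqxx !orbT.
have cls : forall A, A \in typeII k t M W ->
   [/\ #|A| = k, t <= #|A :&: W| <= t + 2,
       (#|A :&: W| = t + 1 -> exists2 m, m \in A & m \in M :\: W) &
       (#|A :&: W| = t -> M :\: W \subset A)].
  move=> A; rewrite /typeII /ksubsets !inE => /orP[/orP[|]|].
  - case/andP=> /andP[_ /eqP cA] WA.
    have e : #|A :&: W| = t + 2 by rewrite (setIidPr WA) cW.
    split=> //; [rewrite e; apply/andP; split=> //; nlia|nlia|nlia].
  - case/andP=> /andP[_ /eqP cA] /andP[/eqP e /set0Pn [m /setIP [mA mD]]].
    split=> //; [rewrite e; apply/andP; split=> //; nlia| by exists m | nlia].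
  - case/andP=> /andP[AM /eqP cA] /eqP e.
    split=> //; [rewrite e; apply/andP; split=> //; nlia| nlia |].
    move=> _.
    have sD : A :\: W \subset M :\: W.
      by apply/subsetP=> x; rewrite !inE => /andP[-> /(subsetP AM) ->].
    have := cardsID W A; rewrite e cA => cAD.
    have /eqP eD : A :\: W == M :\: W.
      rewrite eqEcard sD cD; set z := #|A :\: W| in cAD *; nlia.
    by rewrite -eD subsetDl.
have IIint : t_intersecting t (typeII k t M W).
  move=> A B AI BI.
  have [cA /andP[loA hiA] pA qA] := cls A AI.
  have [cB /andP[loB hiB] pB qB] := cls B BI.
  have ilb := @inter_lb _ A B W.
  have split1 : #|A :&: B :&: W| + #|A :&: B :&: (M :\: W)| <= #|A :&: B|.
    rewrite -(cardsID W (A :&: B)) leq_add2l; apply: subset_leq_card.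
    by apply/subsetP=> x; rewrite !inE => /andP[/andP[-> ->] /andP[-> _]].
  rewrite cW in ilb.
  move: split1 ilb.
  set x := #|A :&: B :&: W|; set y := #|A :&: B :&: (M :\: W)|; set z := #|A :&: B|.
  set a := #|A :&: W| in loA hiA pA qA *; set b := #|B :&: W| in loB hiB pB qB *.
  move=> split1 ilb.
  have : a = t + 2 \/ a = t + 1 \/ a = t by nlia.
  have : b = t + 2 \/ b = t + 1 \/ b = t by nlia.
  case=> [eb|[eb|eb]]; case=> [ea|[ea|ea]]; try nlia.
  - have [m mB mD] := pB eb.
    have : 0 < y by apply/card_gt0P; exists m; rewrite !inE mB (subsetP (qA ea) _ mD) /=; move: mD; rewrite inE.
    nlia.
  - have [m mA mD] := pA ea.
    have : 0 < y by apply/card_gt0P; exists m; rewrite !inE mA (subsetP (qB eb) _ mD) /=; move: mD; rewrite inE.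
    nlia.
  - have : #|M :\: W| <= y.
      apply: subset_leq_card; apply/subsetP=> m mD.
      by rewrite !inE (subsetP (qA ea) _ mD) (subsetP (qB eb) _ mD) /=; move: mD; rewrite inE.
    rewrite cD; nlia.
have IIk : typeII k t M W \subset ksubsets setT k.
  apply/subsetP=> A AI; have [cA _ _ _] := cls A AI.
  by rewrite /ksubsets inE subsetT cA eqxx.
by rewrite (Fmax _ IIk IIint FII).
Qed.

Lemma A2facts (T : finType) (W M B : {set T}) w m :
  W \subset M -> w \in W -> m \in M -> m \notin W -> B \subset ~: M ->
  [/\ ((W :\ w) :|: (m |: B)) :&: W = W :\ w,
      ((W :\ w) :|: (m |: B)) :\: W = m |: B,
      ((W :\ w) :|: (m |: B)) :&: (M :\: W) = [set m],
      W :\: ((W :\ w) :|: (m |: B)) = [set w] &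
      ((W :\ w) :|: (m |: B)) :\: M = B].
Proof.
move=> WM wW mM mW BM.
split; apply/setP=> x; rewrite !inE;
 (case xB: (x \in B);
 [ (have xM : (x \in M) = false by apply/negbTE; move/subsetP: BM => /(_ x xB); rewrite inE);
   (have xW : (x \in W) = false by apply/negbTE/negP => /(subsetP WM); rewrite xM);
   (have xw : (x == w) = false by apply/negbTE/negP => /eqP xw; move: xW; rewrite xw wW);
   (have xm : (x == m) = false by apply/negbTE/negP => /eqP xm; move: xM; rewrite xm mM);
   rewrite ?xM ?xW ?xw ?xm
 | case xW: (x \in W);
   [ (have xM : (x \in M) = true by apply: (subsetP WM));
     (have xm : (x == m) = false by apply/negbTE/negP => /eqP xm; move: mW; rewrite -xm xW);
     rewrite ?xM ?xm; case: (x == w)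
   | (have xw : (x == w) = false by apply/negbTE/negP => /eqP xw; move: xW; rewrite xw wW);
     rewrite ?xw; case xm: (x == m);
     [ (have xM : (x \in M) = true by move/eqP: xm => ->); rewrite ?xM | idtac ] ] ]);
 by rewrite /= ?andbF.
Qed.

Arguments A2facts {T W M B w m}.

Lemma card_disj3 (T : finType) (S A B C : {set T}) (g : T -> nat) i j l :
  A \subset S -> B \subset S -> C \subset S ->
  (forall x, x \in A -> g x = i) -> (forall x, x \in B -> g x = j) ->
  (forall x, x \in C -> g x = l) ->
  i != j -> j != l -> i != l -> #|A| + #|B| + #|C| <= #|S|.
Proof.
move=> AS BS CS gA gB gC ij jl il.
have e1 : A :&: B = set0.
  apply/setP=> x; rewrite !inE; apply/negbTE/negP=> /andP[/gA a /gB b].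
  by move: ij; rewrite -a -b eqxx.
have e2 : (A :|: B) :&: C = set0.
  apply/setP=> x; rewrite !inE; apply/negbTE/negP=> /andP[/orP[/gA a|/gB a] /gC b].
    by move: il; rewrite -a -b eqxx.
  by move: jl; rewrite -a -b eqxx.
have := cardsU A B; rewrite e1 cards0 subn0 => <-.
have := cardsU (A :|: B) C; rewrite e2 cards0 subn0 => <-.
apply: subset_leq_card; by rewrite !subUset AS BS CS.
Qed.

Lemma binlem N j a : a <= N -> 'C(N, j.+1) <= 'C(N - a, j.+1) + a * 'C(N.-1, j).
Proof.
elim: a => [|a IH] aN; first by rewrite subn0 mul0n addn0.
have := IH (ltnW aN).
have -> : N - a = (N - a.+1).+1 by lia.
rewrite binS mulSn.
have : 'C(N - a.+1, j) <= 'C(N.-1, j) by apply: leq_bin2l; lia.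
lia.
Qed.

Lemma A1key (T : finType) (W B : {set T}) : B \subset ~: W -> (W :|: B) :\: W = B.
Proof.
move=> BW; apply/setP=> x; rewrite !inE.
have := subsetP BW x; rewrite inE.
by case: (x \in B); case: (x \in W) => // /(_ erefl).
Qed.

Arguments A1key {T W B}.

Lemma part_ii (n k t : nat) (M W : {set 'I_n}) :
  2 * k < n -> t + 3 <= k -> #|M| = k + 2 -> W \subset M -> #|W| = t + 2 ->
  'C(n - t - 2, k - t - 2) + (t + 2) * (k - t) * 'C(n - k - 2, k - t - 2) + 1
    <= #|typeII k t M W|.
Proof.
move=> hn hk cM WM cW.
set j := k - t - 2.
have WMx := subsetP WM.
have cD : #|M :\: W| = k - t by rewrite cardsDS // cM cW; lia.
have cCW : #|~: W| = n - t - 2 by have := cardsC W; rewrite card_ord cW; lia.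
have cCM : #|~: M| = n - k - 2 by have := cardsC M; rewrite card_ord cM; lia.
have in1 : forall G : {set 'I_n}, #|G| = k -> W \subset G -> G \in typeII k t M W.
  by move=> G cG WG; rewrite /typeII /ksubsets !inE subsetT cG eqxx WG.
have in2 : forall G : {set 'I_n}, #|G| = k -> #|G :&: W| = t + 1 -> G :&: (M :\: W) != set0 ->
    G \in typeII k t M W.
  by move=> G cG cGW GD; rewrite /typeII /ksubsets !inE subsetT cG cGW addn1 !eqxx GD /= orbT.
have in3 : forall G : {set 'I_n}, G \subset M -> #|G| = k -> #|G :&: W| = t -> G \in typeII k t M W.
  by move=> G GM cG cGW; rewrite /typeII /ksubsets !inE GM cG cGW !eqxx /= !orbT.
pose A1 := [set W :|: B | B in ksubsets (~: W) j].
pose A2 := [set (W :\ p.1.1) :|: (p.1.2 |: p.2) |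
             p in setX (setX W (M :\: W)) (ksubsets (~: M) j)].
have : 0 < #|ksubsets W t| by rewrite /ksubsets cards_draws bin_gt0 cW leq_addr.
case/card_gt0P => S0; rewrite /ksubsets inE => /andP[S0W /eqP cS0].
pose H0 := S0 :|: (M :\: W).
have cA1 : #|A1| = 'C(n - t - 2, j).
  rewrite card_in_imset; first by rewrite /ksubsets cards_draws cCW.
  move=> B1 B2; rewrite /ksubsets !inE => /andP[B1W _] /andP[B2W _] e.
  by rewrite -(A1key B1W) e A1key.
have cA2 : #|A2| = (t + 2) * (k - t) * 'C(n - k - 2, j).
  rewrite card_in_imset.
    by rewrite !cardsX cW cD /ksubsets cards_draws cCM.
  move=> [[w1 m1] B1] [[w2 m2] B2]; rewrite /ksubsets !inE /=.
  move=> /andP[/andP[w1W /andP[m1W m1M]] /andP[B1M _]].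
  move=> /andP[/andP[w2W /andP[m2W m2M]] /andP[B2M _]] e.
  have [_ _ f1 g1 h1] := A2facts WM w1W m1M m1W B1M.
  have [_ _ f2 g2 h2] := A2facts WM w2W m2M m2W B2M.
  have ew : w1 = w2 by apply/set1_inj; rewrite -g1 -g2 e.
  have em : m1 = m2 by apply/set1_inj; rewrite -f1 -f2 e.
  have eB : B1 = B2 by rewrite -h1 -h2 e.
  by rewrite ew em eB.
have := @card_disj3 _ (typeII k t M W) A1 A2 [set H0] (fun G => #|G :&: W|)
   (t + 2) (t + 1) t.
rewrite cA1 cA2 cards1; apply.
- apply/subsetP=> G /imsetP [B]; rewrite /ksubsets inE => /andP[BW /eqP cB] ->.
  apply: in1; last exact: subsetUl.
  rewrite cardsU cW cB.
  have -> : W :&: B = set0.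
    apply/setP=> x; rewrite !inE; have := subsetP BW x; rewrite inE.
    by case: (x \in B); case: (x \in W) => // /(_ erefl).
  rewrite cards0 /j; lia.
- apply/subsetP=> G /imsetP [[[w m] B] hp ->].
  rewrite /ksubsets !inE /= in hp.
  case/andP: hp => /andP[wW /andP[mW mM]] /andP[BM /eqP cB].
  have [e1 e2 e3 _ _] := A2facts WM wW mM mW BM.
  have cWw : #|W| = #|W :\ w|.+1 by rewrite (cardsD1 w W) wW.
  apply: in2.
  + rewrite -(cardsID W) e1 e2 cardsU1 cB.
    have -> : m \notin B by apply/negP=> /(subsetP BM); rewrite inE mM.
    rewrite /j; lia.
  + rewrite e1; lia.
  + by rewrite e3; apply/set0Pn; exists m; rewrite inE.
- apply/subsetP=> G; rewrite inE => /eqP ->.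
  have eW : H0 :&: W = S0.
    apply/setP=> x; rewrite !inE; case xS: (x \in S0) => /=.
      by rewrite (subsetP S0W x xS).
    by case: (x \in W); rewrite /= ?andbF.
  have eD : H0 :\: W = M :\: W.
    apply/setP=> x; rewrite !inE; case xS: (x \in S0) => /=.
      by rewrite (subsetP S0W x xS).
    by case: (x \in W); case: (x \in M).
  apply: in3.
  + by rewrite subUset (subset_trans S0W WM) subsetDl.
  + rewrite -(cardsID W) eW eD cS0 cD; lia.
  + by rewrite eW.
- by move=> G /imsetP [B]; rewrite /ksubsets inE => /andP[BW _] ->; rewrite (setIidPr (subsetUl _ _)) cW.
- move=> G /imsetP [[[w m] B]]; rewrite /ksubsets !inE /=.
  move=> /andP[/andP[wW /andP[mW mM]] /andP[BM _]] ->.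
  have [-> _ _ _ _] := A2facts WM wW mM mW BM.
  have := cardsD1 w W; rewrite wW cW add1n => /eqP; rewrite addn2 eqSS => /eqP <-; by rewrite addn1.
- move=> G; rewrite inE => /eqP ->.
  have eW : H0 :&: W = S0.
    apply/setP=> x; rewrite !inE; case xS: (x \in S0) => /=.
      by rewrite (subsetP S0W x xS).
    by case: (x \in W); rewrite /= ?andbF.
  by rewrite eW.
- by rewrite eqn_add2l.
- by rewrite -{2}(addn0 t) eqn_add2l.
- by rewrite -{2}(addn0 t) eqn_add2l.
Qed.


Theorem lemma2p9 (n k t : nat) (F : {set {set 'I_n}}) (M W : {set 'I_n}) :
  2 * k < n -> t + 3 <= k ->
  maximal_t_intersecting k t F ->
  tau t F = t + 2 ->
  tau t (Tcov t F) = t + 1 ->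
  M \in ksubsets setT (k + 2) -> W \in ksubsets M (t + 2) ->
  Tcov t F = [set T in ksubsets M (t + 2) | t + 1 <= #|T :&: W|] ->
  F = typeII k t M W /\
  (#|F|%:Z >
     (((t + 2) * (k - t) + 1) * 'C(n - t - 2, k - t - 2))%:Z
     - ((t + 2) * (k - t) ^ 2 * 'C(n - t - 3, k - t - 3))%:Z)%R.
Proof.
move=> hn hk hmax htau _ hM hW hT.
have eF := @part_i _ _ _ _ _ _ hn hk hmax htau hM hW hT.
split=> //.
rewrite eF.
move: hM hW; rewrite /ksubsets !inE => /andP[_ /eqP cM] /andP[WM /eqP cW].
have lb := @part_ii _ _ _ _ _ hn hk cM WM cW.
have bl := binlem (n - t - 2) (k - t - 3) (k - t).
have e1 : (k - t - 3).+1 = k - t - 2 by lia.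
have e2 : n - t - 2 - (k - t) = n - k - 2 by lia.
have e3 : (n - t - 2).-1 = n - t - 3 by lia.
rewrite e1 e2 e3 in bl.
have /bl {}bl : k - t <= n - t - 2 by lia.
rewrite ltrBlDr -PoszD ltz_nat -mulnn.
move: lb bl.
set T := #|typeII k t M W|.
set c2 := 'C(n - t - 2, k - t - 2).
set c3 := 'C(n - t - 3, k - t - 3).
set c4 := 'C(n - k - 2, k - t - 2).
set s := t + 2; set a := k - t.
move=> lb bl.
have := leq_mul (leqnn (s * a)) bl.
clear -lb; nia.
Qed.
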